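(* Consider the P-SSD algorithm described in the context, executed over a constant (time-invariant) digraph $G$, and let $C_{\mathrm{SSD}}=\mathrm{SSD}(D(X),D(Y))$. Let $i$ be a globally reachable node of $G$ and define $l=\max_{j\in\{1,\dots,M\}}\mathrm{dist}(j,i)$. Then $\mathcal{R}(C_k^i)=\mathcal{R}(C_{\mathrm{SSD}})$ for all $k\ge l+1$.
   Context: Data setting: a map $T:\mathcal{M}\to\mathcal{M}$, $\mathcal{M}\subseteq\mathbb{R}^n$; a dictionary $D(x)=[d_1(x),\dots,d_{N_d}(x)]$ of real-valued functions on $\mathcal{M}$; data matrices $X,Y\in\mathbb{R}^{N\times n}$ whose $i$-th rows $x_i^T,y_i^T$ satisfy $y_i=T(x_i)$; $D(X)\in\mathbb{R}^{N\times N_d}$ is the matrix with rows $D(x_1),\dots,D(x_N)$ (similarly $D(Y)$). Assumption: $D(X)$ and $D(Y)$ have full column rank. There are $M$ agents; agent $i$ holds local dictionary snapshots $D(X_i),D(Y_i)$ (obtained from a subset of the snapshot pairs) such that the union over $i$ of the rows of $[D(X_i),D(Y_i)]$ equals the set of rows of $[D(X),D(Y)]$. There are signature matrices $D(X_s),D(Y_s)$ with full column rank such that the rows of $[D(X_s),D(Y_s)]$ are contained in the rows of $[D(X_i),D(Y_i)]$ for every $i$. SSD algorithm: given $A,B\in\mathbb{R}^{m\times q}$, set $A_1=A$, $B_1=B$, $C=I_q$, and iterate: let $[Z^A_j;Z^B_j]$ be a matrix whose columns form a basis of the null space of $[A_j,B_j]$ (with $Z^A_j$ having as many rows as $A_j$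 has columns); if the null space is trivial return $0$; if the number of rows of $Z^A_j$ is at most its number of columns, return $C$; otherwise set $C\leftarrow CZ^A_j$, $A_{j+1}=A_jZ^A_j$, $B_{j+1}=B_jZ^A_j$. Its output is denoted $\mathrm{SSD}(A,B)$. P-SSD algorithm: at iteration $k\ge1$ the digraph $G_k$ is used; an edge $(j,i)\in E_k$ means $j$ is an in-neighbor of $i$, and $\mathcal{N}_{\mathrm{in}}^k(i)$ denotes the in-neighbors of $i$ in $G_k$. Each agent $i$ sets $C_0^i=I_{N_d}$, $\mathrm{flag}_0^i=0$, and for $k=1,2,\dots$: receives $C_{k-1}^j$ for $j\in\mathcal{N}_{\mathrm{in}}^k(i)$; sets $D_k^i=\mathrm{basis}\big(\bigcap_{j\in\{i\}\cup\mathcal{N}_{\mathrm{in}}^k(i)}\mathcal{R}(C_{k-1}^j)\big)$; sets $E_k^i=\mathrm{SSD}(D(X_i)D_k^i,D(Y_i)D_k^i)$; if the number of columns of $D_k^iE_k^i$ is strictly less than that of $C_{k-1}^i$, sets $C_k^i=D_k^iE_k^i$ and $\mathrm{flag}_k^i=0$; otherwise sets $C_k^i=C_{k-1}^i$ and $\mathrm{flag}_k^i=1$; then transmits $C_k^i$ to its out-neighbors. Here $\mathrm{basis}(\mathcal{A})$ returns a matrix whose columns form a basis of the subspace $\mathcal{A}$, and returns $0$ if $\mathcal{A}=\{0\}$; the matrix $0$ is regarded as having $0$ columns. $\mathcal{R}(\cdot)$ denotes range space. A node is globally reachable if there is a directed path from every other node to it; $\mathrm{dist}(j,i)$ is the length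 of a shortest directed path from $j$ to $i$ (with $\mathrm{dist}(i,i)=0$). *)

(* Defs.v *)
From HB Require Import structures.
From mathcomp Require Import all_boot all_order all_algebra.
Set Implicit Arguments.
Unset Strict Implicit.
Unset Printing Implicit Defensive.
Import GRing.Theory Num.Theory.
Local Open Scope ring_scope.

Definition mxc (R : fieldType) (m : nat) := {c : nat & 'M[R]_(m, c)}.

(* Range space: R(A) is the column space of A, i.e. the row space of A^T.
   R(A) = R(B)  is  (A^T == B^T)%MS. *)

(* The columns of Z form a basis of the subspace whose elements are the
   (transposed) rows of the row space of S (MathComp's representation of a
   subspace of R^m by a matrix with m columns).  A matrix with 0 columns is
   the (unique) basis of the zero subspace, which matches the convention
   basis({0}) = 0 with 0 columns. *)
Definition is_basis_of (R : fieldType) (m c p : nat)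
  (Z : 'M[R]_(m, c)) (S : 'M[R]_(p, m)) : bool :=
  row_free Z^T && (Z^T == S)%MS.

(* Null space of N : 'M_(m,q), i.e. {v | N v = 0}, represented as a row space:
   kermx N^T  (whose row space is {u | u *m N^T = 0}). *)
Definition nullsp (R : fieldType) (m q : nat) (N : 'M[R]_(m, q)) : 'M[R]_q :=
  kermx N^T.

(* Relational semantics of the SSD algorithm with accumulator C:
   ssd_rel C A B out  means that, starting the loop with current matrices
   A_j = A, B_j = B and C = C, some run of the algorithm (for some choice of
   the null-space bases) returns out. *)
Inductive ssd_rel (R : fieldType) (m q0 : nat) :
  forall q, 'M[R]_(q0, q) -> 'M[R]_(m, q) -> 'M[R]_(m, q) -> mxc R q0 -> Prop :=
| ssd_null q (C : 'M[R]_(q0, q)) (A B : 'M[R]_(m, q)) :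
    (nullsp (row_mx A B) == (0 : 'M[R]_(q + q)))%MS ->
    ssd_rel C A B (existT _ 0%N (0 : 'M[R]_(q0, 0)))
| ssd_stop q (C : 'M[R]_(q0, q)) (A B : 'M[R]_(m, q)) c (Z : 'M[R]_(q + q, c)) :
    ~~ (nullsp (row_mx A B) == (0 : 'M[R]_(q + q)))%MS ->
    is_basis_of Z (nullsp (row_mx A B)) ->
    (q <= c)%N ->
    ssd_rel C A B (existT _ q C)
| ssd_step q (C : 'M[R]_(q0, q)) (A B : 'M[R]_(m, q)) c (Z : 'M[R]_(q + q, c))
    (out : mxc R q0) :
    ~~ (nullsp (row_mx A B) == (0 : 'M[R]_(q + q)))%MS ->
    is_basis_of Z (nullsp (row_mx A B)) ->
    (c < q)%N ->
    ssd_rel (C *m usubmx Z) (A *m usubmx Z) (B *m usubmx Z) out ->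
    ssd_rel C A B out.

Definition SSD_out (R : fieldType) (m q : nat) (A B : 'M[R]_(m, q))
  (out : mxc R q) : Prop :=
  ssd_rel (1%:M : 'M[R]_q) A B out.

(* Relational semantics of P-SSD over the time-invariant digraph E
   (E j i  <=>  (j,i) is an edge, i.e. j is an in-neighbor of i).  The flags do not influence C and are omitted. *)
Definition pssd_run (R : fieldType) (M Nd : nat) (E : rel 'I_M)
  (Ni : 'I_M -> nat) (DXi DYi : forall i : 'I_M, 'M[R]_(Ni i, Nd))
  (C : nat -> 'I_M -> mxc R Nd) : Prop :=
  (forall i, C 0%N i = existT _ Nd (1%:M : 'M[R]_Nd)) /\
  forall (k : nat) (i : 'I_M),
    exists (d : nat) (Dk : 'M[R]_(Nd, d)),
      is_basis_of Dk
        (\bigcap_(j | (j == i) || E j i) <<(projT2 (C k j))^T>>)%MS /\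
      exists Ek : mxc R d,
        SSD_out (DXi i *m Dk) (DYi i *m Dk) Ek /\
        C k.+1 i = (if (projT1 Ek < projT1 (C k i))%N
                    then existT _ (projT1 Ek) (Dk *m projT2 Ek)
                    else C k i).

Definition Dmat (R : fieldType) (n Nd N : nat) (D : 'rV[R]_n -> 'rV[R]_Nd)
  (X : 'M[R]_(N, n)) : 'M[R]_(N, Nd) :=
  \matrix_(k < N) D (row k X).

Definition walkb (T : finType) (E : rel T) (len : nat) (j i : T) : bool :=
  [exists p : len.-tuple T, path E j p && (last j p == i)].

(* A shortest
   walk, when one exists, has length < #|T|, so the search over 0..#|T|-1
   is exhaustive (for unreachable pairs the value #|T| is irrelevant). *)
Definition dist (T : finType) (E : rel T) (j i : T) : nat :=
  find (fun len => walkb E len j i) (iota 0 #|T|).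

(* Main.v *)
Require Import Defs.
From HB Require Import structures.
From mathcomp Require Import all_boot all_order all_algebra.
Import GRing.Theory Num.Theory.
Set Implicit Arguments.
Unset Strict Implicit.
Unset Printing Implicit Defensive.
Local Open Scope ring_scope.

Definition invs (R : fieldType) m q p (A B : 'M[R]_(m,q)) (S : 'M[R]_(p,q)) :=
  (S *m A^T <= S *m B^T)%MS.

Lemma row_free_mul (R : fieldType) m n p (A : 'M[R]_(m,n)) (B : 'M[R]_(n,p)) :
  row_free A -> row_free B -> row_free (A *m B).
Proof. by move=> hA hB; rewrite /row_free mxrankMfree. Qed.

Lemma kerN (R : fieldType) m q p (A' B' : 'M[R]_(m,q)) (X Xb : 'M[R]_(p,q)) :
  row_mx X Xb *m (row_mx A' B')^T = X *m A'^T + Xb *m B'^T.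
Proof. by rewrite tr_row_mx mul_row_col. Qed.

Lemma ssd_G (R : fieldType) m q0 q p (A B : 'M[R]_(m,q0)) (C : 'M[R]_(q0,q))
  (S : 'M[R]_(p,q0)) : (S <= C^T)%MS -> invs A B S ->
  exists X Xb, S = X *m C^T /\
    (row_mx X Xb <= kermx (row_mx (A *m C) (B *m C))^T)%MS.
Proof.
move=> /submxP[X ->] /submxP[Y hY].
exists X, (- (Y *m X)); split=> //.
apply/sub_kermxP; rewrite kerN !trmx_mul !mulmxA hY !mulmxA.
by rewrite !mulNmx addrN.
Qed.

Lemma ZA_free (R : fieldType) m q c (A' B' : 'M[R]_(m,q)) (Z : 'M[R]_(q+q,c)) :
  row_free B'^T -> row_free Z^T -> (Z^T <= kermx (row_mx A' B')^T)%MS ->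
  row_free (usubmx Z)^T.
Proof.
move=> hB hZ /sub_kermxP hK.
have eZ : Z^T = row_mx (usubmx Z)^T (dsubmx Z)^T.
  by rewrite -tr_col_mx vsubmxK.
apply: inj_row_free => v hv.
move: hK; rewrite eZ kerN => hK.
have h1 : v *m (dsubmx Z)^T *m B'^T = 0.
  have := congr1 (mulmx v) hK; rewrite mulmx0 mulmxDr !mulmxA hv mul0mx add0r.
  by [].
move/eqP: h1; rewrite mulmx_free_eq0 // => /eqP h1.
apply/eqP; rewrite -(mulmx_free_eq0 _ hZ) eZ mul_mx_row hv h1.
by rewrite row_mx0.
Qed.

Lemma ssd_correct (R : fieldType) m q0 (A B : 'M[R]_(m,q0)) (hB : row_free B^T) :
  forall q (C : 'M[R]_(q0,q)) A' B' out, ssd_rel C A' B' out ->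
  A' = A *m C -> B' = B *m C -> row_free C^T ->
  [/\ row_free (projT2 out)^T, ((projT2 out)^T <= C^T)%MS, invs A B (projT2 out)^T &
     forall p (S : 'M[R]_(p,q0)), (S <= C^T)%MS -> invs A B S -> (S <= (projT2 out)^T)%MS].
Proof.
move=> q C A' B' out H; elim: H => {q C A' B' out}.
- move=> q C A' B' hnull eA eB hC /=; subst A' B'; rewrite trmx0; split.
  + by rewrite /row_free mxrank0.
  + exact: sub0mx.
  + by rewrite /invs !mul0mx.
  + move=> p S hS hinv; have [X [Xb [-> hk]]] := ssd_G hS hinv.
    move: hnull; rewrite /nullsp => /eqmx0P e; move: hk; rewrite e submx0.
    by rewrite -row_mx0 => /eqP /eq_row_mx [-> _]; rewrite mul0mx sub0mx.
- move=> q C A' B' c Z _ /andP[hZ /eqmxP hZe] hqc eA eB hC /=; subst A' B'; split=> //.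
  rewrite /invs.
  have hBC : row_free (B *m C)^T by rewrite trmx_mul row_free_mul.
  have hK : (Z^T <= kermx (row_mx (A *m C) (B *m C))^T)%MS.
    by rewrite hZe /nullsp.
  have hfree := ZA_free hBC hZ hK.
  have hfull : row_full (usubmx Z)^T.
    have := rank_leq_col (usubmx Z)^T; rewrite (eqP hfree) => hcq.
    by rewrite /row_full (eqP hfree) eqn_leq hcq hqc.
  have [Bf hBf] := row_fullP hfull.
  move/sub_kermxP: hK; rewrite -[Z]vsubmxK tr_col_mx kerN.
  move/(congr1 (mulmx Bf)); rewrite mulmx0 mulmxDr => /eqP; rewrite addr_eq0 => /eqP h.
  rewrite -[C^T *m A^T]mul1mx -hBf. rewrite -mulmxA -trmx_mul h eqmx_opp trmx_mul !mulmxA.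
  by rewrite -mulmxA submxMl.
- move=> q C A' B' c Z out _ /andP[hZ /eqmxP hZe] hcq _ IH eA eB hC; subst A' B'.
  have hBC : row_free (B *m C)^T by rewrite trmx_mul row_free_mul.
  have hK : (Z^T <= kermx (row_mx (A *m C) (B *m C))^T)%MS.
    by rewrite hZe /nullsp.
  have hfree := ZA_free hBC hZ hK.
  have hC' : row_free (C *m usubmx Z)^T by rewrite trmx_mul row_free_mul.
  have [h1 h2 h3 h4] := IH (esym (mulmxA _ _ _)) (esym (mulmxA _ _ _)) hC'.
  split => //.
  + by apply: submx_trans h2 _; rewrite trmx_mul submxMl.
  + move=> p S hS hinv; apply: h4 => //.
    have [X [Xb [-> hk]]] := ssd_G hS hinv.
    have hk' : (row_mx X Xb <= Z^T)%MS by rewrite hZe.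
    have [W hW] := submxP hk'.
    move: hW; rewrite -[Z]vsubmxK tr_col_mx mul_mx_row => /eq_row_mx [-> _].
    by rewrite vsubmxK trmx_mul -mulmxA submxMl.
Qed.

Lemma entryT (R : fieldType) m n (u : 'rV[R]_n) (M : 'M[R]_(m,n)) k :
  (u *m M^T) 0 k = (u *m (row k M)^T) 0 0.
Proof. by rewrite !mxE; apply: eq_bigr => t _; rewrite !mxE. Qed.

Lemma inv_row (R : fieldType) m n p (M1 M2 : 'M[R]_(m,n)) (V : 'M[R]_(p,n))
  (u : 'rV[R]_n) : (u <= V)%MS -> invs M1 M2 V ->
  exists2 w : 'rV[R]_n, (w <= V)%MS & u *m M1^T = w *m M2^T.
Proof.
move=> /submxP[a ->] /submxP[Y hY].
exists (a *m Y *m V); first exact: submxMl.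
by rewrite -mulmxA hY !mulmxA.
Qed.

Lemma row_mx_rows (R : fieldType) m1 m2 n (A1 B1 : 'M[R]_(m1,n)) (A2 B2 : 'M[R]_(m2,n)) r k :
  row r (row_mx A1 B1) = row k (row_mx A2 B2) -> row r A1 = row k A2 /\ row r B1 = row k B2.
Proof. by rewrite !row_row_mx => /eq_row_mx. Qed.

Lemma sig_eq (R : fieldType) Nd M (Ni : 'I_M -> nat)
  (DXi DYi : forall i : 'I_M, 'M[R]_(Ni i, Nd)) Ns (DXs DYs : 'M[R]_(Ns, Nd))
  (hsig : forall (i : 'I_M) (r : 'I_Ns), exists r' : 'I_(Ni i),
      row r (row_mx DXs DYs) = row r' (row_mx (DXi i) (DYi i)))
  a (u w : 'rV[R]_Nd) : u *m (DXi a)^T = w *m (DYi a)^T ->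
  u *m DXs^T = w *m DYs^T.
Proof.
move=> h; apply/rowP => r0.
have [r' /row_mx_rows [e1 e2]] := hsig a r0.
by rewrite entryT [RHS]entryT e1 e2 -!entryT h.
Qed.

Lemma combine (R : fieldType) Nd M N (GA GB : 'M[R]_(N,Nd)) (Ni : 'I_M -> nat)
  (DXi DYi : forall i : 'I_M, 'M[R]_(Ni i, Nd)) Ns (DXs DYs : 'M[R]_(Ns, Nd))
  (hDYs : row_full DYs)
  (hloc2 : forall k : 'I_N, exists (i : 'I_M) (r : 'I_(Ni i)),
      row r (row_mx (DXi i) (DYi i)) = row k (row_mx GA GB))
  (hsig : forall (i : 'I_M) (r : 'I_Ns), exists r' : 'I_(Ni i),
      row r (row_mx DXs DYs) = row r' (row_mx (DXi i) (DYi i)))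
  p (V : 'M[R]_(p,Nd)) i :
  invs (DXi i) (DYi i) V ->
  (forall j, exists q (W : 'M[R]_(q,Nd)), (V <= W)%MS /\ invs (DXi j) (DYi j) W) ->
  invs GA GB V.
Proof.
move=> hi hW; apply/row_subP => k0; rewrite !row_mul.
have hu : (row k0 V <= V)%MS := row_sub k0 V.
have [w hwV hw] := inv_row hu hi.
have hfree : row_free DYs^T by rewrite /row_free mxrank_tr.
suff -> : row k0 V *m GA^T = w *m GB^T by apply: submxMr.
apply/rowP => k.
have [j [r /row_mx_rows [e1 e2]]] := hloc2 k.
have [q [W [hVW hWj]]] := hW j.
have [w' _ hw'] := inv_row (submx_trans hu hVW) hWj.
have ew : w' = w.
  apply: (row_free_inj hfree).
  by rewrite -(sig_eq hsig hw) -(sig_eq hsig hw').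
by rewrite entryT [RHS]entryT -e1 -e2 -!entryT hw' ew.
Qed.

Lemma glob_loc (R : fieldType) Nd M N (GA GB : 'M[R]_(N,Nd)) (Ni : 'I_M -> nat)
  (DXi DYi : forall i : 'I_M, 'M[R]_(Ni i, Nd))
  (hloc1 : forall (i : 'I_M) (r : 'I_(Ni i)), exists k : 'I_N,
      row r (row_mx (DXi i) (DYi i)) = row k (row_mx GA GB))
  p (V : 'M[R]_(p,Nd)) j :
  invs GA GB V -> invs (DXi j) (DYi j) V.
Proof.
move=> hg; apply/row_subP => k0; rewrite !row_mul.
have hu : (row k0 V <= V)%MS := row_sub k0 V.
have [w hwV hw] := inv_row hu hg.
suff -> : row k0 V *m (DXi j)^T = w *m (DYi j)^T by apply: submxMr.
apply/rowP => r.
have [k /row_mx_rows [e1 e2]] := hloc1 j r.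
by rewrite entryT [RHS]entryT e1 e2 -!entryT hw.
Qed.

Lemma dist_walk (T : finType) (E : rel T) j i : connect E j i ->
  exists p : seq T, [/\ path E j p, last j p = i & size p = dist E j i].
Proof.
move/connectP => [p hp ->].
case: (shortenP hp) => p' hp' hu _.
have hs : (size p' < #|T|)%N.
  have := max_card (mem (j :: p')).
  by rewrite (card_uniqP hu).
have hhas : has (fun len => walkb E len j (last j p')) (iota 0 #|T|).
  apply/hasP; exists (size p'); first by rewrite mem_iota.
  by apply/existsP; exists (in_tuple p'); rewrite /= hp' eqxx.
have := nth_find 0%N hhas; rewrite nth_iota; last first.
  by rewrite -{2}(size_iota 0 #|T|) -has_find.
move=> /existsP [t /andP [ht /eqP hl]].
by exists t; split => //; rewrite size_tuple.
Qed.

Lemma inv_sub (R : fieldType) m n p1 p2 (A B : 'M[R]_(m,n)) (U : 'M[R]_(p1,n))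
  (V : 'M[R]_(p2,n)) : (U <= V)%MS -> (V <= U)%MS -> invs A B U -> invs A B V.
Proof.
move=> /submxP[a ->] /submxP[b hb] h; rewrite /invs {1}hb.
rewrite -mulmxA; apply: submx_trans (submxMl _ _) _.
apply: submx_trans h _; rewrite -mulmxA; exact: submxMl.
Qed.

Theorem theorem5p2 (R : realFieldType) (n N Nd M : nat)
  (T : 'rV[R]_n -> 'rV[R]_n) (D : 'rV[R]_n -> 'rV[R]_Nd)
  (X Y : 'M[R]_(N, n))
  (hXY : forall k : 'I_N, row k Y = T (row k X))
  (hDX : row_full (Dmat D X)) (hDY : row_full (Dmat D Y))
  (Ni : 'I_M -> nat) (DXi DYi : forall i : 'I_M, 'M[R]_(Ni i, Nd))
  (hloc1 : forall (i : 'I_M) (r : 'I_(Ni i)), exists k : 'I_N,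
      row r (row_mx (DXi i) (DYi i)) = row k (row_mx (Dmat D X) (Dmat D Y)))
  (hloc2 : forall k : 'I_N, exists (i : 'I_M) (r : 'I_(Ni i)),
      row r (row_mx (DXi i) (DYi i)) = row k (row_mx (Dmat D X) (Dmat D Y)))
  (Ns : nat) (DXs DYs : 'M[R]_(Ns, Nd))
  (hDXs : row_full DXs) (hDYs : row_full DYs)
  (hsig : forall (i : 'I_M) (r : 'I_Ns), exists r' : 'I_(Ni i),
      row r (row_mx DXs DYs) = row r' (row_mx (DXi i) (DYi i)))
  (E : rel 'I_M) (i : 'I_M)
  (hreach : forall j : 'I_M, connect E j i)
  (CSSD : mxc R Nd) (hCSSD : SSD_out (Dmat D X) (Dmat D Y) CSSD)
  (C : nat -> 'I_M -> mxc R Nd) (hrun : pssd_run E DXi DYi C) :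
  forall k : nat, ((\max_(j < M) dist E j i).+1 <= k)%N ->
    ((projT2 (C k i))^T == (projT2 CSSD)^T)%MS.
Proof.
set GA := Dmat D X; set GB := Dmat D Y.
have hI : forall q, row_free (1%:M : 'M[R]_q)^T by move=> q; rewrite trmx1 row_free_unit unitmx1.
have hGB : row_free GB^T by rewrite /row_free mxrank_tr.
have [g1 g2 g3 g4] := ssd_correct hGB hCSSD (esym (mulmx1 _)) (esym (mulmx1 _)) (hI _).
set Ss := (projT2 CSSD)^T in g1 g2 g3 g4 *.
pose V k j := (projT2 (C k j))^T.
have hDYi : forall j, row_free (DYi j)^T.
  move=> j; apply: inj_row_free => v hv.
  have hDYs' : row_free DYs^T by rewrite /row_free mxrank_tr.
  apply: (row_free_inj hDYs'); rewrite mul0mx.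
  by rewrite -(sig_eq hsig (u := 0) (w := v) (a := j)) ?mul0mx ?hv.
have [hrun0 hrunS] := hrun.
have step : forall k,
   (forall j, row_free (V k j) /\ (Ss <= V k j)%MS) ->
   forall j, [/\ row_free (V k.+1 j), (Ss <= V k.+1 j)%MS,
      invs (DXi j) (DYi j) (V k.+1 j) &
      forall j', (j' == j) || E j' j -> (V k.+1 j <= V k j')%MS].
  move=> k IH j.
  have [d [Dk [/andP [hDk /eqmxP hDke] [Ek [hE hCk]]]]] := hrunS k j.
  have hBl : row_free (DYi j *m Dk)^T by rewrite trmx_mul row_free_mul.
  have [l1 l2 l3 l4] := ssd_correct hBl hE (esym (mulmx1 _)) (esym (mulmx1 _)) (hI _).
  set O := projT2 Ek in l1 l2 l3 l4 hCk.
  set U := (Dk *m O)^T.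
  have hU1 : row_free U by rewrite /U trmx_mul row_free_mul.
  have hUD : (U <= Dk^T)%MS by rewrite /U trmx_mul submxMl.
  have hU4 : forall j', (j' == j) || E j' j -> (U <= V k j')%MS.
    move=> j' hj'; apply: submx_trans hUD _; rewrite hDke.
    by apply: (bigcapmx_inf j' hj'); rewrite genmxE.
  have hU3 : invs (DXi j) (DYi j) U.
    by move: l3; rewrite /invs /U !trmx_mul !mulmxA.
  have hU2 : (Ss <= U)%MS.
    have hSD : (Ss <= Dk^T)%MS.
      rewrite hDke; apply/sub_bigcapmxP => j' _; rewrite genmxE; exact: (IH j').2.
    have [Xs hXs] := submxP hSD.
    have hinvX : invs (DXi j *m Dk) (DYi j *m Dk) Xs.
      have := glob_loc hloc1 j g3; rewrite /invs hXs !trmx_mul !mulmxA //.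
    have := l4 _ Xs; rewrite trmx1 submx1 => /(_ isT hinvX) hX.
    by rewrite hXs /U trmx_mul submxMr.
  have [hVU hUV] : (V k.+1 j <= U)%MS /\ (U <= V k.+1 j)%MS.
    rewrite /V hCk; case: ifP => hlt /=; first by rewrite -/O -/U submx_refl.
    have hUVk : (U <= V k j)%MS by apply: hU4; rewrite eqxx.
    have := mxrank_leqif_eq hUVk.
    rewrite (eqP hU1) (eqP (IH j).1) => -[hle heq].
    have : (U == V k j)%MS by rewrite -heq eqn_leq hle leqNgt hlt.
    by move/eqmxP => e; split; rewrite e; exact: submx_refl.
  split.
  - by rewrite /V hCk; case: ifP => _ /=; [exact: hU1 | exact: (IH j).1].
  - exact: submx_trans hU2 hUV.
  - exact: inv_sub hUV hVU hU3.
  - by move=> j' hj'; apply: submx_trans hVU (hU4 j' hj').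
have inv_all : forall k j, [/\ row_free (V k j), (Ss <= V k j)%MS &
    (0 < k)%N -> invs (DXi j) (DYi j) (V k j)].
  elim=> [|k IHk] j.
    by rewrite /V hrun0 /= trmx1 row_free_unit unitmx1 submx1.
  have [h1 h2 h3 _] := step k (fun j => let: And3 a b _ := IHk j in conj a b) j.
  by split.
have hP4 : forall k j j', (j' == j) || E j' j -> (V k.+1 j <= V k j')%MS.
  move=> k j j' h.
  have [_ _ _ h4] := step k (fun j => let: And3 a b _ := inv_all k j in conj a b) j.
  exact: h4.
have chain : forall (p : seq 'I_M) j' k, path E j' p -> (size p <= k)%N ->
    (V k (last j' p) <= V (k - size p)%N j')%MS.
  elim=> [|x p IH] j' k /=; first by rewrite subn0 submx_refl.
  move=> /andP [hE hp] hk.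
  apply: submx_trans (IH x k hp (ltnW hk)) _.
  rewrite -(subnSK hk); apply: hP4; by rewrite hE orbT.
move=> k hk; apply/andP; split; last by have [] := inv_all k i.
have := g4 _ (V k i); rewrite trmx1 submx1; apply => //.
have [_ _ hi] := inv_all k i.
apply: (combine hDYs hloc2 hsig (i := i)); first by apply: hi; apply: leq_trans hk.
move=> j; have [p [hp hl hs]] := dist_walk (hreach j).
have hd : (dist E j i <= \max_(j0 < M) dist E j0 i)%N by apply: (leq_bigmax j).
exists (projT1 (C (k - size p)%N j)), (V (k - size p)%N j); split.
  have hc := chain p j k hp; rewrite hl in hc; apply: hc; rewrite hs; apply: leq_trans hd (ltnW hk).
have [_ _ h3] := inv_all (k - size p)%N j; apply: h3.
by rewrite subn_gt0 hs; apply: leq_ltn_trans hd hk.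
Qed.
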